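(* Let $H$ be an even graph (every vertex of even degree) properly embedded in an oriented surface, with edge weights $K_{xy}$ (and fixed square roots $\sqrt{K_{xy}}$). Then \[ \prod_{xy\in E(H)}K_{xy}=\sum_{(M_v)_{v\in V(H)}}\ \prod_{v\in V(H)}(-1)^{\mathrm{cr}(M_v)}\prod_{\{xv,vz\}\in M_v}\sqrt{K_{xv}K_{vz}}, \] where the sum is over all families $(M_v)_{v}$ in which each $M_v$ is a perfect matching of the complete graph $\iota(v,H)$ whose vertex set is the set of edges of $H$ incident to $v$.
   Context: For a perfect matching $M_v$ of $\iota(v,H)$, $\mathrm{cr}(M_v)$ is the number of pairs of matched pairs $\{e_1,e_2\},\{h_1,h_2\}\in M_v$ that cross at $v$, i.e. satisfy $e_1<h_1<e_2<h_2$ in the cyclic order of edges around $v$ induced by the orientation of the surface. *)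

(* Defs.v *)
From HB Require Import structures.
From mathcomp Require Import all_boot all_order all_algebra.
Set Implicit Arguments. Unset Strict Implicit. Unset Printing Implicit Defensive.
Import GRing.Theory.

(* A simple graph on vertex set 'I_n, given by a symmetric irreflexive
   adjacency relation [adj].  Edges are the 2-element sets [set x; y]. *)
Definition simple_graph (n : nat) (adj : rel 'I_n) : Prop :=
  symmetric adj /\ irreflexive adj.

(* Neighbourhood of v = set of edges incident to v, identified with the
   other endpoints (graph is simple). *)
Definition nbhd (n : nat) (adj : rel 'I_n) (v : 'I_n) : {set 'I_n} :=
  [set u | adj v u].

Definition even_graph (n : nat) (adj : rel 'I_n) : Prop :=
  forall v, ~~ odd #|nbhd adj v|.

(* Rotation system induced by an oriented embedding: at each vertex v,
   [rot v] lists the edges incident to v (through their other endpoints)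
   in the cyclic order given by the orientation of the surface. *)
Definition rotation_system (n : nat) (adj : rel 'I_n)
  (rot : 'I_n -> seq 'I_n) : Prop :=
  forall v, uniq (rot v) /\ (forall u, (u \in rot v) = adj v u).

Definition perfect_matching (n : nat) (adj : rel 'I_n) (v : 'I_n)
  (M : {set {set 'I_n}}) : bool :=
  partition M (nbhd adj v) && [forall B in M, #|B| == 2].

(* e1 < h1 < e2 < h2 in the cyclic order of the sequence s
   (positions in s, up to cyclic rotation). *)
Definition lin_lt4 (a b c d : nat) : bool := [&& a < b, b < c & c < d]%N.
Definition cyc_lt4 (n : nat) (s : seq 'I_n) (e1 h1 e2 h2 : 'I_n) : bool :=
  let a := index e1 s in let b := index h1 s in
  let c := index e2 s in let d := index h2 s in
  [|| lin_lt4 a b c d, lin_lt4 b c d a, lin_lt4 c d a b | lin_lt4 d a b c].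

Definition cross_at (n : nat) (s : seq 'I_n) (B1 B2 : {set 'I_n}) : bool :=
  [exists e1 in B1, exists e2 in B1, exists h1 in B2, exists h2 in B2,
     cyc_lt4 s e1 h1 e2 h2].

Definition cr (n : nat) (s : seq 'I_n) (M : {set {set 'I_n}}) : nat :=
  #|[set P : {set {set 'I_n}} | (P \subset M) &&
      [exists B1 in P, exists B2 in P,
         (P == [set B1; B2]) && (B1 != B2) && cross_at s B1 B2]]|.

(* Main.v *)
Require Import Defs.
From HB Require Import structures.
From mathcomp Require Import all_boot all_order all_algebra.
From mathcomp Require Import zify.
Import GRing.Theory.
Set Implicit Arguments. Unset Strict Implicit. Unset Printing Implicit Defensive.
Local Open Scope ring_scope.

Lemma ex_in_set2 (T : finType) (a b : T) (P : pred T) :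
  [exists x in [set a; b], P x] = P a || P b.
Proof.
apply/existsP/orP => [[x /andP[]]|[Pa|Pb]].
- by rewrite !inE => /orP[]/eqP-> ->; [left|right].
- by exists a; rewrite !inE eqxx Pa.
- by exists b; rewrite !inE eqxx orbT.
Qed.

Lemma cyc_rot n (s : seq 'I_n) e1 h1 e2 h2 :
  cyc_lt4 s e1 h1 e2 h2 = cyc_lt4 s h1 e2 h2 e1.
Proof. rewrite /cyc_lt4 /lin_lt4; lia. Qed.

Lemma cross_sym n (s : seq 'I_n) B1 B2 : cross_at s B1 B2 = cross_at s B2 B1.
Proof.
suff H : forall B1 B2, cross_at s B1 B2 -> cross_at s B2 B1.
  by apply/idP/idP; apply: H.
move=> {}B1 {}B2 /existsP[e1 /andP[He1 /existsP[e2 /andP[He2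
   /existsP[h1 /andP[Hh1 /existsP[h2 /andP[Hh2 H]]]]]]]].
apply/existsP; exists h1; rewrite Hh1 /=; apply/existsP; exists h2; rewrite Hh2 /=.
apply/existsP; exists e2; rewrite He2 /=; apply/existsP; exists e1; rewrite He1 /=.
by rewrite -cyc_rot.
Qed.

Definition crset n (s : seq 'I_n) (M : {set {set 'I_n}}) :=
  [set P : {set {set 'I_n}} | (P \subset M) &&
      [exists B1 in P, exists B2 in P,
         (P == [set B1; B2]) && (B1 != B2) && cross_at s B1 B2]].

Lemma crE n (s : seq 'I_n) M : cr s M = #|crset s M|.
Proof. by []. Qed.

Lemma cr_add n (s : seq 'I_n) (M : {set {set 'I_n}}) (A : {set 'I_n}) :
  A \notin M -> cr s (A |: M) = (cr s M + #|[set B in M | cross_at s A B]|)%N.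
Proof.
move=> AM; rewrite !crE.
have E : crset s (A |: M) =
   crset s M :|: [set [set A; B] | B in [set B in M | cross_at s A B]].
  apply/setP => P; rewrite !inE; apply/idP/idP.
  - case/andP => sub Hex; have := Hex.
    move=> /existsP[B1 /andP[PB1 /existsP[B2 /andP[PB2 /andP[/andP[/eqP EP nB] c12]]]]].
    case: (boolP (A \in P)) => AP.
    + apply/orP; right; apply/imsetP.
      have : (A == B1) || (A == B2) by move: AP; rewrite EP !inE.
      case/orP => /eqP eA.
      * exists B2; last by rewrite EP eA.
        rewrite inE eA c12 andbT.
        have := subsetP sub B2 PB2; rewrite !inE => /orP[/eqP e2|//].
        by move: nB; rewrite -eA e2 eqxx.
      * exists B1; last by rewrite EP eA setUC.
        rewrite inE eA cross_sym c12 andbT.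
        have := subsetP sub B1 PB1; rewrite !inE => /orP[/eqP e1|//].
        by move: nB; rewrite -eA e1 eqxx.
    + apply/orP; left; rewrite Hex andbT.
      apply/subsetP => X PX; have := subsetP sub X PX; rewrite !inE.
      by case/orP => // /eqP eX; move: AP; rewrite -eX PX.
  - case/orP.
    + case/andP => sub ->; rewrite andbT; apply: subset_trans sub _.
      exact: subsetUr.
    + case/imsetP => B; rewrite inE => /andP[BM cAB] ->.
      apply/andP; split.
        by apply/subsetP => X; rewrite !inE => /orP[]/eqP->; rewrite ?eqxx ?BM ?orbT.
      apply/existsP; exists A; rewrite !inE eqxx /=.
      apply/existsP; exists B; rewrite !inE eqxx orbT /= eqxx /= cAB andbT.
      by apply: contraNneq AM => ->.
rewrite E cardsU.
have -> : crset s M :&: [set [set A; B] | B in [set B in M | cross_at s A B]] = set0.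
  apply/setP => P; rewrite !inE; apply/negbTE/negP => /andP[/andP[sub _] /imsetP[B _ eP]].
  by move: AM; rewrite (subsetP sub A) // eP !inE eqxx.
rewrite cards0 subn0 card_in_imset //.
move=> B B'; rewrite !inE => /andP[BM _] /andP[B'M _] E'.
have : B \in [set A; B'] by rewrite -E' !inE eqxx orbT.
rewrite !inE => /orP[/eqP eBA|/eqP //].
by move: AM; rewrite -eBA BM.
Qed.

Definition pm n (S : {set 'I_n}) (M : {set {set 'I_n}}) :=
  partition M S && [forall B in M, #|B| == 2].

Lemma pm0 n (M : {set {set 'I_n}}) : pm set0 M = (M == set0).
Proof.
apply/idP/idP.
- case/andP => /and3P[/eqP cov _ n0] _.
  apply/eqP/setP => B; rewrite inE; apply/negbTE/negP => BM.
  have : B \subset cover M := bigcup_sup B BM.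
  rewrite cov subset0 => /eqP eB.
  by move: n0; rewrite -eB BM.
- move/eqP->; rewrite /pm /partition /trivIset /cover !big_set0 cards0 !eqxx inE /=.
  by apply/forallP => B; rewrite inE.
Qed.

Lemma pm_add n (S : {set 'I_n}) (M : {set {set 'I_n}}) p q :
  p \in S -> q \in S -> p != q ->
  [&& pm S ([set p; q] |: M), [set p; q] \in [set p; q] |: M &
      ([set p; q] |: M) :\ [set p; q] == M] = pm (S :\: [set p; q]) M.
Proof.
move=> pS qS npq; set pq := [set p; q].
have pqS : pq \subset S by apply/subsetP => x; rewrite !inE => /orP[]/eqP->.
apply/idP/idP.
- case/and3P => /andP[/and3P[/eqP cov tI n0] sz] _ /eqP eM.
  have nin : pq \notin M by rewrite -eM setD11.
  apply/andP; split; last first.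
    apply/forallP => B; apply/implyP => BM.
    exact: (implyP (forallP sz B) (setU1r _ BM)).
  rewrite /partition; apply/and3P; split.
  - by rewrite -{1}eM coverD1 ?setU11 // cov.
  - by apply: trivIsetS tI; apply: subsetUr.
  - by apply: contra n0 => h; apply: setU1r.
- case/andP => /and3P[/eqP cov tI n0] sz.
  have nin : pq \notin M.
    apply/negP => pqM; have : p \in cover M by apply/bigcupP; exists pq; rewrite ?inE ?eqxx.
    by rewrite cov !inE eqxx.
  rewrite setU11 setU1K // eqxx !andbT /pm.
  have pq0 : set0 != pq by rewrite eq_sym; apply/set0Pn; exists p; rewrite !inE eqxx.
  apply/andP; split.
    rewrite /partition; apply/and3P; split.
    - by rewrite /cover big_setU1 //= -/(cover M)  cov -{2}(setID S pq) (setIidPr pqS).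
    - case: (@trivIsetU1 _ pq M) => // B BM.
      rewrite -setI_eq0; apply/eqP/setP => x; rewrite inE [in RHS]inE.
      apply/negbTE/andP => [[xA xB]].
      have : B \subset cover M := bigcup_sup B BM.
      move/subsetP/(_ x xB); rewrite cov in_setD xA.
      by [].
    - by rewrite !inE negb_or pq0.
  apply/forallP => B; apply/implyP; rewrite !inE => /orP[/eqP->|BM].
    by rewrite cards2 npq.
  exact: (implyP (forallP sz B) BM).
Qed.

Lemma pm_partner n (S : {set 'I_n}) M p :
  pm S M -> p \in S ->
  exists2 q0, q0 \in S :\ p & forall q, (q \in S :\ p) && ([set p; q] \in M) = (q == q0).
Proof.
case/andP => /and3P[/eqP cov tI n0] sz pS.
have : p \in cover M by rewrite cov.
case/bigcupP => B BM pB.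
have := forallP sz B; rewrite BM /= => /cards2P[x [y [nxy eB]]].
have [q0 [q0S nq0 eB']] : exists q0, [/\ q0 \in S, q0 != p & B = [set p; q0]].
  have xS : x \in S by rewrite -cov; apply/bigcupP; exists B; rewrite // eB !inE eqxx.
  have yS : y \in S by rewrite -cov; apply/bigcupP; exists B; rewrite // eB !inE eqxx orbT.
  move: pB; rewrite eB !inE => /orP[]/eqP ep.
  + by exists y; rewrite yS ep eq_sym nxy.
  + by exists x; rewrite xS ep nxy setUC.
exists q0; first by rewrite !inE nq0.
move=> q; apply/idP/idP; last by move/eqP->; rewrite !inE nq0 q0S -eB' BM.
case/andP; rewrite !inE => /andP[nqp qS] pqM.
apply/negPn/negP => nqq0.
have neq : [set p; q] != B.
  apply/negP => /eqP e; have : q \in B by rewrite -e !inE eqxx orbT.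
  by rewrite eB' !inE (negbTE nqp) (negbTE nqq0).
have := (elimT trivIsetP tI) _ _ pqM BM neq.
move/disjointFr => /(_ p); rewrite !inE eqxx eB' !inE eqxx => /(_ isT).
by [].
Qed.

Lemma alt_sum (R : comNzRingType) m :
  \sum_(i <- iota 0 m) ((-1) ^+ i : R) = (odd m)%:R.
Proof.
elim: m => [|m IH]; first by rewrite big_nil.
rewrite -addn1 iotaD big_cat /= IH big_cons big_nil addr0 add0n.
rewrite -signr_odd addn1 /=; case: (odd m) => /=.
  by rewrite expr1 addrN.
by rewrite expr0 add0r.
Qed.

Lemma count_sign (R : comNzRingType) n (s : seq 'I_n) (A : {set 'I_n}) :
  uniq s -> {subset A <= s} -> odd #|A| ->
  \sum_(q in A) ((-1) ^+ #|[set x in A | (index x s < index q s)%N]| : R) = 1.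
Proof.
move=> Us sAs oA.
set r := fun q => #|[set x in A | (index x s < index q s)%N]|.
have rlt : forall q q', q \in A -> (index q s < index q' s)%N -> (r q < r q')%N.
  move=> q q' qA lt; apply: proper_card; apply/properP; split.
    by apply/subsetP => x; rewrite !inE => /andP[-> h]; apply: ltn_trans h lt.
  by exists q; rewrite !inE ?qA ?lt // ltnn andbF.
have rinj : {in enum A &, injective r}.
  move=> q q'; rewrite !mem_enum => qA q'A E.
  case: (ltngtP (index q s) (index q' s)) => [lt|gt|eq].
  - by have := rlt _ _ qA lt; rewrite E ltnn.
  - by have := rlt _ _ q'A gt; rewrite E ltnn.
  - exact: (index_inj q (sAs _ qA) (sAs _ q'A) eq).
have Um : uniq (map r (enum A)) by rewrite map_inj_in_uniq // enum_uniq.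
have sub : {subset map r (enum A) <= iota 0 #|A|}.
  move=> i /mapP[q]; rewrite mem_enum => qA ->; rewrite mem_iota /= add0n.
  apply: proper_card; apply/properP; split.
    by apply/subsetP => x; rewrite !inE => /andP[].
  by exists q; rewrite // !inE qA ltnn.
have le : (size (iota 0 #|A|) <= size (map r (enum A)))%N.
  by rewrite size_iota size_map -cardE.
have [_ eqm] := uniq_min_size Um sub le.
rewrite -big_enum /= -(big_map r xpredT (fun i => (-1) ^+ i)).
rewrite (perm_big (iota 0 #|A|)); last by apply: uniq_perm => //; apply: iota_uniq.
by rewrite alt_sum oA.
Qed.

Lemma cr0 n (s : seq 'I_n) : cr s set0 = 0%N.
Proof.
rewrite crE; apply/eqP; rewrite cards_eq0; apply/eqP/setP => P; rewrite !inE.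
apply/negbTE/negP => /andP[sub /existsP[B1 /andP[PB1 _]]].
by have := subsetP sub _ PB1; rewrite inE.
Qed.

Lemma cyc_same1 n (s : seq 'I_n) x h1 h2 : cyc_lt4 s x h1 x h2 = false.
Proof. rewrite /cyc_lt4 /lin_lt4; lia. Qed.

Lemma cyc_same2 n (s : seq 'I_n) e1 x e2 : cyc_lt4 s e1 x e2 x = false.
Proof. rewrite /cyc_lt4 /lin_lt4; lia. Qed.

Lemma cyc_swap n (s : seq 'I_n) x y h1 h2 : cyc_lt4 s x h1 y h2 = cyc_lt4 s y h2 x h1.
Proof. by rewrite cyc_rot cyc_rot. Qed.

Lemma cyc_minE n (s : seq 'I_n) p x q y :
  (index p s < index x s)%N -> (index p s < index q s)%N -> (index p s < index y s)%N ->
  cyc_lt4 s p x q y = (index x s < index q s < index y s)%N.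
Proof.
rewrite /cyc_lt4 /lin_lt4.
move: (index p s) (index q s) (index x s) (index y s) => a c u v.
lia.
Qed.

Lemma parity (R : comNzRingType) n (s : seq 'I_n) (S : {set 'I_n}) p q M :
  uniq s -> {subset S <= s} -> p \in S ->
  (forall x, x \in S -> (index p s <= index x s)%N) ->
  q \in S :\ p -> pm (S :\: [set p; q]) M ->
  \prod_(B in M) ((-1) ^+ cross_at s [set p; q] B : R) =
  (-1) ^+ #|[set x in S :\ p | (index x s < index q s)%N]|.
Proof.
move=> Us sSs pS pmin qSp /andP[/and3P[/eqP cov tI _] sz].
set I := [set x in S :\ p | (index x s < index q s)%N].
have /andP[nqp qS] : (q != p) && (q \in S) by rewrite -in_setD1.
have ineq : forall x y, x \in S -> y \in S -> x != y -> index x s != index y s.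
  by move=> x y xS yS; apply: contraNneq => /(index_inj x (sSs _ xS) (sSs _ yS)) ->.
have pmins : forall x, x \in S -> x != p -> (index p s < index x s)%N.
  move=> x xS nxp; rewrite ltn_neqAle pmin // andbT.
  by apply: ineq => //; rewrite eq_sym.
transitivity (\prod_(B in M) \prod_(x in B) (if x \in I then -1 else 1 : R)).
  apply: eq_bigr => B BM.
  have := forallP sz B; rewrite BM => /cards2P[b [d [nbd eB]]].
  have inS : forall x, x \in B -> [/\ x \in S, x != p & x != q].
    move=> x xB; have : B \subset cover M := bigcup_sup B BM.
    move/subsetP/(_ x xB); rewrite cov !inE negb_or => /andP[/andP[-> ->] ->].
    by [].
  have [bS nbp nbq] : [/\ b \in S, b != p & b != q] by apply: inS; rewrite eB !inE eqxx.
  have [dS ndp ndq] : [/\ d \in S, d != p & d != q].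
    by apply: inS; rewrite eB !inE eqxx orbT.
  have bd : b \notin [set d] by rewrite inE.
  rewrite eB big_setU1 //= big_set1.
  have bI : (b \in I) = (index b s < index q s)%N by rewrite !inE bS nbp.
  have dI : (d \in I) = (index d s < index q s)%N by rewrite !inE dS ndp.
  have -> : cross_at s [set p; q] [set b; d] = ((b \in I) != (d \in I)).
    rewrite /cross_at !ex_in_set2 !(cyc_same1 s p) !(cyc_same1 s q).
    rewrite !(cyc_same2 s _ b) !(cyc_same2 s _ d) !(cyc_swap s q p) /=.
    have h1 := pmins _ bS nbp. have h2 := pmins _ dS ndp. have h3 := pmins _ qS nqp.
    rewrite !cyc_minE // bI dI.
    have h4 := ineq _ _ bS qS nbq. have h5 := ineq _ _ dS qS ndq.
    move: h4 h5; move: (index q s) (index b s) (index d s) => c x y.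
    move=> h4 h5.
    by case: (ltngtP x c) h4 => // h; case: (ltngtP y c) h5 => //= h'; lia.
  by case: (b \in I); case: (d \in I); rewrite /= ?(mulrNN, mulr1, mul1r, expr1, expr0).
rewrite -big_trivIset // cov -big_mkcondr /= -prodr_const.
apply: eq_bigl => x; apply/andP/idP => [[]//|xI]; split => //.
move: xI; rewrite !inE => /andP[/andP[xp xS] lt].
rewrite negb_or xp xS andbT /=; apply: contraTneq lt => ->; by rewrite ltnn.
Qed.

Lemma Pf (R : comNzRingType) n (s : seq 'I_n) : uniq s -> forall k (S : {set 'I_n}),
  (#|S| <= k)%N -> {subset S <= s} -> ~~ odd #|S| ->
  \sum_(M | pm S M) ((-1) ^+ cr s M : R) = 1.
Proof.
move=> Us.
have Pf0 : \sum_(M | pm set0 M) ((-1) ^+ cr s M : R) = 1.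
  by rewrite (big_pred1 set0) ?cr0 ?expr0 // => M; rewrite pm0.
elim=> [|k IH] S.
  by rewrite leqn0 => /eqP /cards0_eq -> _ _.
move=> leS sSs eS.
case: (set_0Vmem S) => [->|[p0 p0S]]; first exact: Pf0.
have [p pS pmin] : exists2 p, p \in S & forall x, x \in S -> (index p s <= index x s)%N.
  have := @arg_minnP _ p0 (mem S) (fun x => index x s) p0S.
  by case => p pS pmin; exists p.
transitivity (\sum_(q in S :\ p)
   \sum_(M | pm S M && ([set p; q] \in M)) ((-1) ^+ cr s M : R)).
  symmetry; rewrite (exchange_big_dep (pm S)) /=; last by move=> q M _ /andP[].
  apply: eq_bigr => M pmM.
  have [q0 q0S E] := pm_partner pmM pS.
  by rewrite (big_pred1 q0) // => q; rewrite pmM /= E.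
have oSp : odd #|S :\ p|.
  by move: eS; rewrite (cardsD1 p S) pS oddD /= negbK.
have sSps : {subset S :\ p <= s} by move=> x; rewrite in_setD1 => /andP[_ /sSs].
transitivity (\sum_(q in S :\ p)
   ((-1) ^+ #|[set x in S :\ p | (index x s < index q s)%N]| : R)); last first.
  exact: count_sign.
apply: eq_bigr => q qSp.
have /andP[nqp qS] : (q != p) && (q \in S) by rewrite -in_setD1.
have npq : p != q by rewrite eq_sym.
set pq := [set p; q].
have pqS : pq \subset S by apply/subsetP => x; rewrite !inE => /orP[]/eqP->.
rewrite (reindex_onto (fun M' => pq |: M') (fun M => M :\ pq)) /=; last first.
  by move=> M /andP[_ pqM]; rewrite setD1K.
rewrite (eq_bigl (fun M' => pm (S :\: pq) M')); last first.
  by move=> M'; rewrite -andbA pm_add.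
transitivity (\sum_(M' | pm (S :\: pq) M') ((-1) ^+ cr s M' *
    (-1) ^+ #|[set x in S :\ p | (index x s < index q s)%N]|) : R).
  apply: eq_bigr => M' pmM'.
  have nin : pq \notin M'.
    move: pmM'; rewrite -pm_add // => /and3P[_ _ /eqP eM].
    by rewrite -eM setD11.
  rewrite cr_add // exprD; congr (_ * _).
  rewrite -(@parity R _ s S p q M' Us sSs pS pmin qSp pmM') -prodr_const.
  rewrite [in RHS](bigID (fun B => cross_at s pq B)) /=.
  transitivity (\prod_(B in M' | cross_at s pq B) ((-1) : R) * 1).
    by rewrite mulr1; apply: eq_bigl => B; rewrite !inE.
  congr (_ * _).
    by apply: eq_bigr => B /andP[_ ->].
  by rewrite big1 // => B /andP[_ /negbTE ->].
rewrite -mulr_suml IH ?mul1r //.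
- rewrite cardsD (setIidPr pqS) cards2 npq; move: leS; clear; lia.
- by move=> x; rewrite in_setD => /andP[_ /sSs].
- have two : (2 <= #|S|)%N by have := subset_leq_card pqS; rewrite cards2 npq.
  by rewrite cardsD (setIidPr pqS) cards2 npq oddB //= addbF.
Qed.

Theorem mainTheorem6 (R : comNzRingType) (n : nat) (adj : rel 'I_n)
  (rot : 'I_n -> seq 'I_n) (K sqK : {set 'I_n} -> R)
  (Hg : simple_graph adj) (Heven : even_graph adj)
  (Hrot : rotation_system adj rot)
  (Hsq : forall x y : 'I_n, adj x y -> sqK [set x; y] * sqK [set x; y] = K [set x; y]) :
  \prod_(x < n) \prod_(y < n | ((x < y)%N && adj x y)) K [set x; y] =
  \sum_(f : {ffun 'I_n -> {set {set 'I_n}}} | [forall v, perfect_matching adj v (f v)])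
    \prod_(v < n) ((-1) ^+ cr (rot v) (f v) *
                   \prod_(B in f v) \prod_(u in B) sqK [set u; v]).
Proof.
case: Hg => Hsym Hirr.
transitivity (\prod_(v < n) \sum_(M | perfect_matching adj v M)
   ((-1) ^+ cr (rot v) M * \prod_(B in M) \prod_(u in B) sqK [set u; v])); last first.
  rewrite bigA_distr_big_dep; apply: eq_bigl => f.
  by apply/familyP/forallP => H v; apply: H.
transitivity (\prod_(v < n) \prod_(u in nbhd adj v) sqK [set u; v]); last first.
  apply: eq_bigr => v _.
  transitivity (\sum_(M | perfect_matching adj v M)
     ((-1) ^+ cr (rot v) M * \prod_(u in nbhd adj v) sqK [set u; v])); last first.
    apply: eq_bigr => M; rewrite /perfect_matching => /andP[/and3P[/eqP cov tI _] _].
    by rewrite -big_trivIset // cov.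
  rewrite -mulr_suml.
  have [Uv Mv] := Hrot v.
  rewrite (@Pf R n (rot v) Uv #|nbhd adj v| (nbhd adj v)) ?mul1r //.
  by move=> x; rewrite inE Mv.
transitivity (\prod_(x < n) \prod_(y < n | ((x < y)%N && adj x y))
   (sqK [set x; y] * sqK [set x; y])).
  by apply: eq_bigr => x _; apply: eq_bigr => y /andP[_ a]; rewrite Hsq.
transitivity ((\prod_(x < n) \prod_(y < n | ((x < y)%N && adj x y)) sqK [set x; y]) *
   (\prod_(x < n) \prod_(y < n | ((x < y)%N && adj x y)) sqK [set x; y])).
  by rewrite -big_split; apply: eq_bigr => x _; rewrite -big_split.
transitivity (\prod_(v < n) ((\prod_(u < n | adj v u && (v < u)%N) sqK [set u; v]) *
    (\prod_(u < n | adj v u && ~~ (v < u)%N) sqK [set u; v]))); last first.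
  apply: eq_bigr => v _.
  symmetry; rewrite (bigID (fun u : 'I_n => (v < u)%N)) /=.
  by congr (_ * _); apply: eq_bigl => u; rewrite inE.
rewrite big_split /=; congr (_ * _).
  apply: eq_bigr => x _; apply: eq_big => y; first by rewrite andbC.
  by move=> _; rewrite setUC.
rewrite (exchange_big_dep xpredT) //=.
apply: eq_bigr => x _; apply: eq_bigl => y /=.
rewrite (Hsym y x) -leqNgt.
case a: (adj x y); rewrite ?andbF ?andbT //=.
rewrite ltn_neqAle; suff -> : (y != x :> nat) by [].
apply/negP => /eqP /val_inj exy; by move: a; rewrite exy Hirr.
Qed.
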